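(* Let $\mathcal C$ be a category with a class of cofibrations and a class of fibrations such that every map from a cofibrant object to a fibrant object factors both as a cofibration followed by an acyclic fibration and as an acyclic cofibration followed by a fibration. The following conditions are equivalent: (i) for any bifibrant object $A$ and any factorization $\mathrm{Id}_A\colon A\hookrightarrow B\to A$ of the identity as a cofibration followed by an acyclic fibration, the cofibration is acyclic; (ii) there is a class $\mathcal F$ of acyclic fibrations such that any map from a cofibrant object to a fibrant object factors as a cofibration followed by a map in $\mathcal F$, and condition (i) holds for those factorizations whose acyclic fibration part is in $\mathcal F$; (iii) any cofibration $A\hookrightarrow B$ with $A$ cofibrant and $B$ fibrant admits a relative cylinder object; (iv) any cofibration $A\hookrightarrow B$ between bifibrant objects admits a relative cylinder object.
   Context: A class of cofibrations: a class of maps with a cofibrant initial object $0$ ($X$ cofibrant iff $0\to X$ is a cofibration), containing isomorphisms with cofibrant domain, closed under composition, and such that pushouts of a cofibration $A\to B$ along $A\to C$ with $A,C$ cofibrant exist and $C\to C\sqcup_AB$ is a cofibration; a class of fibrations is the dual notion (fibrant objects dually). Bifibrant = fibrant and cofibrant. Acyclic fibration: fibration with the right lifting property against all cofibrations between cofibrant objects; acyclic cofibration: cofibration with the left lifting property against all fibrations between fibrant objects. A relative (strong) cylinder object for a cofibration $A\to B$ is a factorization $B\sqcup_AB\to I_AB\to B$ of the codiagonal whose first map is a cofibration and whose restriction along the first inclusion $B\to B\sqcup_AB$ is an acyclic cofibration. *)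

(* Defs.v *)
Record Category := {
  Ob :> Type;
  Hom : Ob -> Ob -> Type;
  comp : forall a b c : Ob, Hom b c -> Hom a b -> Hom a c;
  idm : forall a : Ob, Hom a a;
  comp_assoc : forall a b c d (h : Hom c d) (g : Hom b c) (f : Hom a b),
      comp a c d h (comp a b c g f) = comp a b d (comp b c d h g) f;
  id_left : forall a b (f : Hom a b), comp a b b (idm b) f = f;
  id_right : forall a b (f : Hom a b), comp a a b f (idm a) = f
}.

Arguments Hom {C} a b : rename.
Arguments comp {C a b c} g f : rename.
Arguments idm {C} a : rename.

Notation "g ∘ f" := (comp g f) (at level 40, left associativity).

Section Defs.
Variable C : Category.

Definition MapClass := forall a b : Ob C, @Hom C a b -> Prop.

Definition is_iso {a b : Ob C} (f : Hom a b) : Prop :=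
  exists g : Hom b a, g ∘ f = idm a /\ f ∘ g = idm b.

Definition is_initial (z : Ob C) : Prop :=
  forall X : Ob C, inhabited (Hom z X) /\ forall f g : Hom z X, f = g.

Definition is_terminal (t : Ob C) : Prop :=
  forall X : Ob C, inhabited (Hom X t) /\ forall f g : Hom X t, f = g.

(* with z initial: "the" map z -> X lies in cof *)
Definition cofibrant (cof : MapClass) (z X : Ob C) : Prop :=
  exists f : Hom z X, cof _ _ f.

Definition fibrant (fib : MapClass) (t X : Ob C) : Prop :=
  exists f : Hom X t, fib _ _ f.

Definition is_pushout {A B Cc : Ob C} (i : Hom A B) (f : Hom A Cc)
  (D : Ob C) (j : Hom Cc D) (g : Hom B D) : Prop :=
  j ∘ f = g ∘ i /\
  forall (E : Ob C) (u : Hom Cc E) (v : Hom B E), u ∘ f = v ∘ i ->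
    exists h : Hom D E, h ∘ j = u /\ h ∘ g = v /\
      forall h' : Hom D E, h' ∘ j = u -> h' ∘ g = v -> h' = h.

Definition is_pullback {X Y Z : Ob C} (p : Hom X Y) (g : Hom Z Y)
  (P : Ob C) (q : Hom P Z) (r : Hom P X) : Prop :=
  g ∘ q = p ∘ r /\
  forall (E : Ob C) (u : Hom E Z) (v : Hom E X), g ∘ u = p ∘ v ->
    exists h : Hom E P, q ∘ h = u /\ r ∘ h = v /\
      forall h' : Hom E P, q ∘ h' = u -> r ∘ h' = v -> h' = h.

Definition is_cofibration_class (cof : MapClass) (z : Ob C) : Prop :=
  is_initial z /\
  cof _ _ (idm z) /\
  (forall A B (f : Hom A B), is_iso f -> cofibrant cof z A -> cof _ _ f) /\
  (forall A B D (f : Hom A B) (g : Hom B D), cof _ _ f -> cof _ _ g -> cof _ _ (g ∘ f)) /\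
  (forall A B Cc (i : Hom A B) (f : Hom A Cc),
     cof _ _ i -> cofibrant cof z A -> cofibrant cof z Cc ->
     (exists D (j : Hom Cc D) (g : Hom B D), is_pushout i f D j g) /\
     (forall D (j : Hom Cc D) (g : Hom B D), is_pushout i f D j g -> cof _ _ j)).

Definition is_fibration_class (fib : MapClass) (t : Ob C) : Prop :=
  is_terminal t /\
  fib _ _ (idm t) /\
  (forall A B (f : Hom A B), is_iso f -> fibrant fib t B -> fib _ _ f) /\
  (forall A B D (f : Hom A B) (g : Hom B D), fib _ _ f -> fib _ _ g -> fib _ _ (g ∘ f)) /\
  (forall X Y Z (p : Hom X Y) (g : Hom Z Y),
     fib _ _ p -> fibrant fib t Y -> fibrant fib t Z ->
     (exists P (q : Hom P Z) (r : Hom P X), is_pullback p g P q r) /\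
     (forall P (q : Hom P Z) (r : Hom P X), is_pullback p g P q r -> fib _ _ q)).

Definition bifibrant (cof fib : MapClass) (z t X : Ob C) : Prop :=
  cofibrant cof z X /\ fibrant fib t X.

Definition llp {A B X Y : Ob C} (i : Hom A B) (p : Hom X Y) : Prop :=
  forall (u : Hom A X) (v : Hom B Y), p ∘ u = v ∘ i ->
    exists h : Hom B X, h ∘ i = u /\ p ∘ h = v.

Definition acyclic_fibration (cof fib : MapClass) (z : Ob C)
  {X Y : Ob C} (p : Hom X Y) : Prop :=
  fib _ _ p /\
  forall A B (i : Hom A B), cof _ _ i -> cofibrant cof z A -> cofibrant cof z B ->
    llp i p.

Definition acyclic_cofibration (cof fib : MapClass) (t : Ob C)
  {A B : Ob C} (i : Hom A B) : Prop :=
  cof _ _ i /\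
  forall X Y (p : Hom X Y), fib _ _ p -> fibrant fib t X -> fibrant fib t Y ->
    llp i p.

(* A relative (strong) cylinder object for i : A -> B: a factorization
   B ⊔_A B --c--> I --p--> B of the codiagonal, with c a cofibration and
   c ∘ in1 an acyclic cofibration. *)
Definition has_relative_cylinder (cof fib : MapClass) (t : Ob C)
  {A B : Ob C} (i : Hom A B) : Prop :=
  exists (P : Ob C) (in1 in2 : Hom B P), is_pushout i i P in1 in2 /\
  exists (I : Ob C) (c : Hom P I) (p : Hom I B),
    p ∘ c ∘ in1 = idm B /\ p ∘ c ∘ in2 = idm B /\
    cof _ _ c /\ acyclic_cofibration cof fib t (c ∘ in1).

End Defs.

Arguments is_iso {C a b} f.
Arguments cofibrant {C} cof z X.
Arguments fibrant {C} fib t X.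
Arguments is_pushout {C A B Cc} i f D j g.
Arguments is_pullback {C X Y Z} p g P q r.
Arguments is_cofibration_class {C} cof z.
Arguments is_fibration_class {C} fib t.
Arguments bifibrant {C} cof fib z t X.
Arguments llp {C A B X Y} i p.
Arguments acyclic_fibration {C} cof fib z {X Y} p.
Arguments acyclic_cofibration {C} cof fib t {A B} i.
Arguments has_relative_cylinder {C} cof fib t {A B} i.

(* Main.v *)
Require Import Defs.

Lemma ext_r (C : Category) (a b c d : Ob C) (g : Hom b c) (f : Hom a b) (k : Hom a c) :
  g ∘ f = k -> forall h : Hom d a, g ∘ (f ∘ h) = k ∘ h.
Proof. intros H h. rewrite comp_assoc, H. reflexivity. Qed.

Ltac rassoc := repeat rewrite <- comp_assoc.

Lemma cofibrant_comp (C : Category) (cof : MapClass C) z A B (i : Hom A B) :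
  (forall A B D (f : Hom A B) (g : Hom B D), cof _ _ f -> cof _ _ g -> cof _ _ (g ∘ f)) ->
  cofibrant cof z A -> cof _ _ i -> cofibrant cof z B.
Proof. intros Hc [g Hg] Hi. exists (i ∘ g). apply Hc; auto. Qed.

Lemma fibrant_comp (C : Category) (fib : MapClass C) t A B (p : Hom A B) :
  (forall A B D (f : Hom A B) (g : Hom B D), fib _ _ f -> fib _ _ g -> fib _ _ (g ∘ f)) ->
  fibrant fib t B -> fib _ _ p -> fibrant fib t A.
Proof. intros Hc [g Hg] Hi. exists (g ∘ p). apply Hc; auto. Qed.

Lemma po_uniq (C : Category) (A B Cc D E : Ob C) (i : Hom A B) (f : Hom A Cc)
  (j : Hom Cc D) (g : Hom B D) (h1 h2 : Hom D E) :
  is_pushout i f D j g -> h1 ∘ j = h2 ∘ j -> h1 ∘ g = h2 ∘ g -> h1 = h2.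
Proof.
  intros [Hsq Hu] E1 E2.
  destruct (Hu E (h1 ∘ j) (h1 ∘ g)) as [h [_ [_ Hh]]].
  { rassoc. rewrite Hsq. reflexivity. }
  rewrite (Hh h1 eq_refl eq_refl). symmetry. apply Hh; symmetry; assumption.
Qed.

Theorem proposition2p3p2 (C : Category) (cof fib : MapClass C) (z t : Ob C)
  (Hcof : is_cofibration_class cof z) (Hfib : is_fibration_class fib t)
  (Hfact1 : forall X Y (f : Hom X Y), cofibrant cof z X -> fibrant fib t Y ->
     exists (Z : Ob C) (i : Hom X Z) (p : Hom Z Y),
       cof _ _ i /\ acyclic_fibration cof fib z p /\ p ∘ i = f)
  (Hfact2 : forall X Y (f : Hom X Y), cofibrant cof z X -> fibrant fib t Y ->
     exists (Z : Ob C) (i : Hom X Z) (p : Hom Z Y),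
       acyclic_cofibration cof fib t i /\ fib _ _ p /\ p ∘ i = f) :
  let cond_i :=
    forall A B (i : Hom A B) (p : Hom B A), bifibrant cof fib z t A ->
      cof _ _ i -> acyclic_fibration cof fib z p -> p ∘ i = idm A ->
      acyclic_cofibration cof fib t i in
  let cond_ii :=
    exists F : MapClass C,
      (forall X Y (p : Hom X Y), F _ _ p -> acyclic_fibration cof fib z p) /\
      (forall X Y (f : Hom X Y), cofibrant cof z X -> fibrant fib t Y ->
         exists (Z : Ob C) (i : Hom X Z) (p : Hom Z Y),
           cof _ _ i /\ F _ _ p /\ p ∘ i = f) /\
      (forall A B (i : Hom A B) (p : Hom B A), bifibrant cof fib z t A ->
         cof _ _ i -> F _ _ p -> p ∘ i = idm A ->
         acyclic_cofibration cof fib t i) in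
  let cond_iii :=
    forall A B (i : Hom A B), cofibrant cof z A -> fibrant fib t B ->
      cof _ _ i -> has_relative_cylinder cof fib t i in
  let cond_iv :=
    forall A B (i : Hom A B), bifibrant cof fib z t A -> bifibrant cof fib z t B ->
      cof _ _ i -> has_relative_cylinder cof fib t i in
  (cond_i <-> cond_ii) /\ (cond_i <-> cond_iii) /\ (cond_i <-> cond_iv).
Proof.
  destruct Hcof as [Hinit [Hcid [Hciso [Hccomp Hcpo]]]].
  destruct Hfib as [Hterm [Hfid [Hfiso [Hfcomp Hfpb]]]].
  intros ci cii ciii civ.
  assert (H12 : ci -> cii).
  { intros H. exists (fun X Y p => acyclic_fibration cof fib z p).
    split; [auto|]. split; [exact Hfact1|]. exact H. }
  assert (H21 : cii -> ci).
  { intros [F [HF1 [HF2 HF3]]] A B i p [HAc HAf] Hi Hp Hpi.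
    assert (HBc : cofibrant cof z B) by (eapply cofibrant_comp; eauto).
    destruct (HF2 B A p HBc HAf) as [E [c [r [Hc [Hr Hrc]]]]].
    assert (HEc : cofibrant cof z E) by (eapply cofibrant_comp; eauto).
    assert (Hm : acyclic_cofibration cof fib t (c ∘ i)).
    { apply (HF3 A E (c ∘ i) r); auto. split; auto.
      rewrite comp_assoc, Hrc; auto. }
    destruct Hp as [Hpf Hpl].
    destruct (Hpl B E c Hc HBc HEc (idm B) r) as [s [Hs1 Hs2]].
    { rewrite id_right; symmetry; exact Hrc. }
    split; [exact Hi|]. intros X Y f Hf HX HY u v Huv.
    destruct Hm as [_ Hm].
    destruct (Hm X Y f Hf HX HY u (v ∘ s)) as [l [Hl1 Hl2]].
    { rewrite Huv. rassoc. rewrite (ext_r _ _ _ _ _ _ _ _ Hs1), id_left. reflexivity. }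
    exists (l ∘ c). split.
    - rassoc. exact Hl1.
    - rewrite comp_assoc, Hl2. rassoc. rewrite Hs1, id_right. reflexivity. }
  assert (H13 : ci -> ciii).
  { intros H1 A B i HA HB Hi.
    assert (HBc : cofibrant cof z B) by (eapply cofibrant_comp; eauto).
    destruct (Hcpo A B B i i Hi HA HBc) as [[P [in1 [in2 Hpo]]] Hpoc].
    pose proof (Hpoc P in1 in2 Hpo) as Hin1.
    pose proof Hpo as [Hsq Hu].
    destruct (Hu B (idm B) (idm B) eq_refl) as [nab [Hn1 [Hn2 _]]].
    assert (HPc : cofibrant cof z P) by (eapply cofibrant_comp; eauto).
    destruct (Hfact1 P B nab HPc HB) as [I [c [q [Hc [Hq Hqc]]]]].
    exists P, in1, in2. split; [exact Hpo|]. exists I, c, q.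
    split; [rewrite Hqc; exact Hn1|].
    split; [rewrite Hqc; exact Hn2|].
    split; [exact Hc|].
    apply (H1 B I (c ∘ in1) q).
    - split; auto.
    - apply Hccomp; auto.
    - exact Hq.
    - rewrite comp_assoc, Hqc. exact Hn1. }
  assert (H34 : ciii -> civ).
  { intros H3 A B i [HAc _] [_ HBf] Hi. apply H3; auto. }
  assert (H41 : civ -> ci).
  { intros H4 A B i p [HAc HAf] Hi Hp Hpi.
    assert (HBc : cofibrant cof z B) by (eapply cofibrant_comp; eauto).
    destruct Hp as [Hpf Hpl].
    assert (HBf : fibrant fib t B) by (eapply fibrant_comp; eauto).
    destruct (H4 A B i (conj HAc HAf) (conj HBc HBf) Hi)
      as [P [in1 [in2 [Hpo [I [c [q [Hq1 [Hq2 [Hc Hac]]]]]]]]]].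
    pose proof Hpo as [Hsq Hu].
    assert (Hq1' : q ∘ (c ∘ in1) = idm B) by (rewrite comp_assoc; exact Hq1).
    assert (Hq2' : q ∘ (c ∘ in2) = idm B) by (rewrite comp_assoc; exact Hq2).
    destruct (Hu B (i ∘ p) (idm B)) as [w [Hw1 [Hw2 _]]].
    { rassoc. rewrite Hpi, id_right, id_left. reflexivity. }
    assert (HPc : cofibrant cof z P).
    { destruct (Hcpo A B B i i Hi HAc HBc) as [_ Hpoc].
      eapply cofibrant_comp; eauto. }
    assert (HIc : cofibrant cof z I) by (eapply cofibrant_comp; eauto).
    destruct (Hpl P I c Hc HPc HIc w (p ∘ q)) as [K [HK1 HK2]].
    { apply (po_uniq _ _ _ _ _ _ _ _ _ _ _ _ Hpo).
      - rassoc. rewrite Hw1, Hq1', id_right, comp_assoc, Hpi, id_left. reflexivity.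
      - rassoc. rewrite Hw2, Hq2', !id_right. reflexivity. }
    split; [exact Hi|]. intros X Y f Hf HX HY u v Huv.
    destruct Hac as [_ Hac].
    destruct (Hac X Y f Hf HX HY (u ∘ p) (v ∘ K)) as [L [HL1 HL2]].
    { rewrite comp_assoc, Huv. rassoc. rewrite (ext_r _ _ _ _ _ _ _ _ HK1), Hw1.
      reflexivity. }
    exists (L ∘ (c ∘ in2)). split.
    - rassoc. rewrite <- Hsq. rewrite comp_assoc, comp_assoc, <- (comp_assoc _ _ _ _ _ L c in1), HL1.
      rassoc. rewrite Hpi, id_right. reflexivity.
    - rewrite comp_assoc, HL2. rassoc. rewrite (ext_r _ _ _ _ _ _ _ _ HK1), Hw2, id_right.
      reflexivity. }
  split; [tauto|]. split; tauto.
Qed.
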